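(* Let $n \ge 1$ and let $x_1, \dots, x_n$ be real numbers satisfying $$x_1 > -x_2 > x_3 > \cdots > (-1)^{n+1} x_n > 0,$$ i.e. $(-1)^{i+1}x_i > (-1)^{i+2}x_{i+1}$ for $1 \le i \le n-1$ and $(-1)^{n+1}x_n > 0$. For $1 \le r \le n$ let $$s_r = \sum_{1 \le i_1 < i_2 < \cdots < i_r \le n} x_{i_1} x_{i_2} \cdots x_{i_r}$$ be the $r$-th elementary symmetric polynomial in $x_1,\dots,x_n$. Then for every integer $d \ge 0$ (and whenever the index lies in $\{1,\dots,n\}$): $$s_{4d+1} > 0,\quad s_{4d+2} < 0,\quad s_{4d+3} < 0,\quad s_{4d+4} > 0.$$ *)

(* Defs.v *)
From HB Require Import structures.
From mathcomp Require Import all_boot all_order all_algebra.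
Set Implicit Arguments. Unset Strict Implicit. Unset Printing Implicit Defensive.
Import Order.TTheory GRing.Theory Num.Theory.
Local Open Scope ring_scope.

Definition elem_sym (R : comRingType) (n : nat) (x : 'I_n -> R) (r : nat) : R :=
  \sum_(A : {set 'I_n} | #|A| == r) \prod_(i in A) x i.

(* Main.v *)
Require Import Defs.
From HB Require Import structures.
From mathcomp Require Import all_boot all_order all_algebra.
From mathcomp Require Import ring lra zify.
Set Implicit Arguments. Unset Strict Implicit. Unset Printing Implicit Defensive.
Import Order.TTheory GRing.Theory Num.Theory.
Local Open Scope ring_scope.

Definition Pl (R : comNzRingType) (s : seq R) : {poly R} :=
  \prod_(a <- s) (a%:P * 'X + 1).

Lemma bridge (R : comNzRingType) n (x : 'I_n -> R) r :
  elem_sym x r = (Pl [seq x i | i <- enum 'I_n])`_r.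
Proof.
rewrite /Pl big_map big_enum /= bigA_distr coef_sum /elem_sym.
have H : forall J : {set 'I_n},
  \prod_i (if i \in J then (x i)%:P * 'X else 1) = (\prod_(i in J) x i)%:P * 'X^#|J|.
  by move=> J; rewrite -big_mkcond /= big_split /= rmorph_prod prodr_const.
under [RHS]eq_bigr => J _ do rewrite H coefCM coefXn.
rewrite [RHS](bigID (fun J : {set 'I_n} => #|J| == r)) /=.
rewrite [X in _ = _ + X]big1 ?addr0; last first.
  by move=> J /negbTE; rewrite eq_sym => ->; rewrite mulr0.
by apply: eq_bigr => J /eqP ->; rewrite eqxx mulr1.
Qed.

Lemma Pl_cons (R : comNzRingType) a s : Pl (a :: s) = (a%:P * 'X + 1) * Pl s :> {poly R}.
Proof. by rewrite /Pl big_cons. Qed.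

Lemma coefP0 (R : comNzRingType) (a : R) p : ((a%:P * 'X + 1) * p)`_0 = p`_0.
Proof. by rewrite mulrDl mul1r coefD -mulrA coefCM coefXM /= mulr0 add0r. Qed.

Lemma coefPS (R : comNzRingType) (a : R) p r :
  ((a%:P * 'X + 1) * p)`_r.+1 = a * p`_r + p`_r.+1.
Proof. by rewrite mulrDl mul1r coefD -mulrA coefCM coefXM. Qed.

Lemma Pl0 (R : comNzRingType) (s : seq R) : (Pl s)`_0 = 1.
Proof. elim: s => [|a s IH]; first by rewrite /Pl big_nil coef1. by rewrite Pl_cons coefP0. Qed.

Lemma Pl_nilS (R : comNzRingType) r : (Pl (@nil R))`_r.+1 = 0.
Proof. by rewrite /Pl big_nil coef1. Qed.

Lemma Pl_neg (R : comNzRingType) (s : seq R) r :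
  (Pl (map -%R s))`_r = (-1) ^+ r * (Pl s)`_r.
Proof.
elim: s r => [|a s IH] r.
  by case: r => [|r]; rewrite /= ?Pl0 ?Pl_nilS ?mulr0 ?mulr1.
case: r => [|r]; first by rewrite !Pl0 mulr1.
rewrite /= !Pl_cons !coefPS !IH !exprS; ring.
Qed.
Section Main.
Variable R : realFieldType.

Definition alt (y : seq R) := [seq (-1) ^+ i * nth 0 y i | i <- iota 0 (size y)].

Lemma alt_cons a s : alt (a :: s) = a :: map -%R (alt s).
Proof.
rewrite /alt /= expr0 mul1r; congr cons.
rewrite -[in LHS](add0n 1%N) (iotaDl 1 0) -!map_comp; apply: eq_map => i /=.
by rewrite add1n exprS mulN1r mulNr.
Qed.

Lemma alt_nil : alt [::] = [::]. Proof. by []. Qed.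

Definition fe y k := (-1) ^+ k * (Pl (alt y))`_(k.*2).
Definition fo y k := (-1) ^+ k * (Pl (alt y))`_(k.*2.+1).

Lemma sgn2 k : (-1) ^+ (k.*2) = 1 :> R.
Proof. by rewrite -mul2n exprM sqrrN !expr1n. Qed.

Lemma fe0 y : fe y 0 = 1.
Proof. by rewrite /fe Pl0 mulr1. Qed.

Lemma fe_nilS k : fe [::] k.+1 = 0.
Proof. by rewrite /fe alt_nil Pl_nilS mulr0. Qed.

Lemma fo_nil k : fo [::] k = 0.
Proof. by rewrite /fo alt_nil Pl_nilS mulr0. Qed.

Lemma fe_consS a w k : fe (a :: w) k.+1 = fe w k.+1 + a * fo w k.
Proof.
rewrite /fe /fo alt_cons Pl_cons doubleS coefPS !Pl_neg !exprS sgn2; ring.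
Qed.

Lemma fo_cons a w k : fo (a :: w) k = a * fe w k - fo w k.
Proof.
rewrite /fe /fo alt_cons Pl_cons coefPS !Pl_neg !exprS sgn2; ring.
Qed.

Fixpoint good (s : seq R) : Prop :=
  match s with [::] => True | a :: t => 0 < a /\ head 0 t < a /\ good t end.

Lemma altinv y : good y ->
  [/\ (forall k, 0 <= fe y k), (forall k, 0 <= fo y k),
      (forall k, (k.*2 <= size y)%N -> 0 < fe y k),
      (forall k, (k.*2.+1 <= size y)%N -> 0 < fo y k) &
      (forall k, fo y k <= head 0 y * fe y k)].
Proof.
elim: y => [|a w IH].
  move=> _; split.
  - by case=> [|k]; rewrite ?fe0 ?fe_nilS.
  - by move=> k; rewrite fo_nil.
  - by case=> [|k]; rewrite ?fe0 ?fe_nilS.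
  - by [].
  - by move=> k; rewrite fo_nil /= mul0r.
move=> /= [a0 [ha gw]]; have [H1 H2 H3 H4 H5] := IH gw.
have few : forall k, fe w k <= fe (a :: w) k.
  case=> [|k]; rewrite ?fe0 // fe_consS; have := H2 k; have := H1 k.+1; nra.
split.
- case=> [|k]; rewrite ?fe0 // fe_consS; have := H2 k; have := H1 k.+1; nra.
- move=> k; rewrite fo_cons; have := H5 k; have := H1 k; nra.
- case=> [|k]; rewrite ?fe0 // fe_consS /= => hk.
  have := H4 k hk; have := H1 k.+1; nra.
- move=> k /= hk; rewrite fo_cons; have := H3 k hk; have := H5 k; nra.
- move=> k /=; rewrite fo_cons; have := few k; have := H2 k; have := H1 k; nra.
Qed.

End Main.
Lemma good_of (R : realFieldType) (s : seq R) :
  (forall i, (i.+1 < size s)%N -> nth 0 s i.+1 < nth 0 s i) ->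
  (forall i, i.+1 = size s -> 0 < nth 0 s i) -> good s.
Proof.
elim: s => [//|a s IH] hc hl /=.
have gs : good s.
  apply: IH => [i hi|i hi]; first exact: (hc i.+1).
  by have := hl i.+1; rewrite /= hi; apply.
case: s hc hl gs {IH} => [|b t] hc hl gs /=.
  by have h := hl 0%N erefl.
have hb := hc 0%N erefl; have gs' := gs; move: gs' => /= [b0 _].
by split; [exact: lt_trans b0 hb|split].
Qed.

Theorem theorem1 (R : realFieldType) (n : nat) (x : 'I_n -> R)
  (hn : (1 <= n)%N)
  (hchain : forall i j : 'I_n, val j = (val i).+1 ->
      (-1) ^+ (val i).+1 * x j < (-1) ^+ (val i) * x i)
  (hlast : forall i : 'I_n, val i = n.-1 -> 0 < (-1) ^+ (val i) * x i) :
  forall d : nat,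
    ((4 * d + 1 <= n)%N -> 0 < elem_sym x (4 * d + 1)) /\
    ((4 * d + 2 <= n)%N -> elem_sym x (4 * d + 2) < 0) /\
    ((4 * d + 3 <= n)%N -> elem_sym x (4 * d + 3) < 0) /\
    ((4 * d + 4 <= n)%N -> 0 < elem_sym x (4 * d + 4)).
Proof.
case: n x hn hchain hlast => [//|m] x _ hchain hlast d.
pose xf (i : nat) := x (inord i).
pose y := [seq (-1) ^+ i * xf i | i <- iota 0 m.+1].
have sy : size y = m.+1 by rewrite size_map size_iota.
have ny : forall i, (i < m.+1)%N -> nth 0 y i = (-1) ^+ i * xf i.
  by move=> i hi; rewrite (nth_map 0%N) ?size_iota // nth_iota.
have ay : alt y = [seq x i | i <- enum 'I_m.+1].
  have -> : [seq x i | i <- enum 'I_m.+1] = [seq xf i | i <- iota 0 m.+1].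
    rewrite -val_enum_ord -map_comp; apply: eq_map => i /=.
    by rewrite /xf inord_val.
  rewrite /alt sy; apply/eq_in_map => i; rewrite mem_iota add0n => /andP[_ hi].
  rewrite ny // mulrA -exprD addnn -mul2n exprM sqrrN !expr1n mul1r //.
have gy : good y.
  apply: good_of => [i hi|i hi]; rewrite sy in hi.
    rewrite !ny ?(ltnW hi) //.
    have := hchain (inord i) (inord i.+1); rewrite /xf /= !inordK ?(ltnW hi) //.
    by apply.
  have hi' : (i < m.+1)%N by rewrite -hi.
  rewrite ny //; have := hlast (inord i); rewrite /xf /= inordK //; apply.
  by case: hi.
have [_ _ H3 H4 _] := altinv gy.
have E : forall r, elem_sym x r = (Pl (alt y))`_r by move=> r; rewrite ay bridge.
have sg2 : forall k, (-1) ^+ (k.*2) = 1 :> R by exact: sgn2.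
split; [|split; [|split]] => hd; rewrite E.
- have e : (4 * d + 1 = (d.*2).*2.+1)%N by rewrite -!mul2n; lia.
  rewrite e in hd *; rewrite -sy in hd; have := H4 _ hd.
  by rewrite /fo sg2 mul1r.
- have e : (4 * d + 2 = (d.*2.+1).*2)%N by rewrite -!mul2n; lia.
  rewrite e in hd *; rewrite -sy in hd; have := H3 _ hd.
  by rewrite /fe exprS sg2 mulr1 mulN1r oppr_gt0.
- have e : (4 * d + 3 = (d.*2.+1).*2.+1)%N by rewrite -!mul2n; lia.
  rewrite e in hd *; rewrite -sy in hd; have := H4 _ hd.
  by rewrite /fo exprS sg2 mulr1 mulN1r oppr_gt0.
- have e : (4 * d + 4 = (d.+1).*2.*2)%N by rewrite -!mul2n; lia.
  rewrite e in hd *; rewrite -sy in hd; have := H3 _ hd.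
  by rewrite /fe sg2 mul1r.
Qed.
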